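(* Fix $\eta>0$ and $K\ge1$, and let $N=\sum_{j\in V}|N_j|$. Let $\hat\lambda$ be the output of the randomized message passing procedure run for $K$ iterations with the SMP update, where the vertex $i$ is sampled with probability $p_i=|N_i|/N$. Then $$\mathbb{E}\sum_{e\in E,i\in e}\|S^{\hat\lambda}_{e,i}-\mu^{\hat\lambda}_i\|_1^2\le\frac{8N\eta\,(L(0)-\inf_\lambda L(\lambda))}{K}.$$
   Context: Let $G=(V,E)$ be a finite undirected graph with $n=|V|$, $m=|E|$, every vertex incident to at least one edge; $N_i=\{e\in E:i\in e\}$. $\chi$ is a finite label set with $d=|\chi|\ge2$. Costs $C_i\in\mathbb{R}^\chi$, $C_e\in\mathbb{R}^{\chi^2}$; for $e=\{i,j\}$, $x_e=(x_i,x_j)$, $(x_e)_i=x_i$. Dual variables $\lambda=(\lambda_{e,i}(x))\in\mathbb{R}^{2md}$ and $$L(\lambda)=\frac1\eta\sum_{i\in V}\log\sum_{x\in\chi}\exp\Big(-\eta C_i(x)+\eta\sum_{e\in N_i}\lambda_{e,i}(x)\Big)+\frac1\eta\sum_{e\in E}\log\sum_{x_e\in\chi^2}\exp\Big(-\eta C_e(x_e)-\eta\sum_{i\in e}\lambda_{e,i}((x_e)_i)\Big).$$ $\mu^\lambda_i$, $\mu^\lambda_e$ are the normalized distributions proportional to the exponentials inside the two sums; $S^\lambda_{e,i}(x)=\sum_{x_e:(x_e)_i=x}\mu^\lambda_e(x_e)$; slack $\nu^\lambda_{e,i}=S^\lambda_{e,i}-\mu^\lambda_i$. SMP update at vertex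 $i$: for each $e\in N_i$ replace $\lambda_{e,i}(x)$ by $\lambda_{e,i}(x)+\frac1\eta\log S^\lambda_{e,i}(x)-\frac{1}{\eta(|N_i|+1)}\log(\mu^\lambda_i(x)\prod_{e'\in N_i}S^\lambda_{e',i}(x))$, other coordinates unchanged. Randomized message passing procedure: $\lambda^{(0)}=0$; for $k=0,\dots,K-1$, sample a vertex $i_k$ independently from the given distribution and let $\lambda^{(k+1)}$ be $\lambda^{(k)}$ updated at vertex $i_k$ by the update rule evaluated at $\lambda^{(k)}$; output $\hat\lambda\in\arg\min_{\lambda\in\{\lambda^{(0)},\dots,\lambda^{(K)}\}}\sum_{e\in E,i\in e}\|\nu^\lambda_{e,i}\|_1^2$. *)

(* Defs.v *)
From HB Require Import structures.
From mathcomp Require Import all_boot all_order all_algebra.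
From mathcomp Require Import all_classical all_reals all_analysis.
Set Implicit Arguments. Unset Strict Implicit. Unset Printing Implicit Defensive.
Import Order.TTheory GRing.Theory Num.Theory.
Local Open Scope ring_scope.

(* Graph encoding: V a finite vertex type, E : {set V * V} a set of ordered
   pairs (i,j) with i != j and (j,i) \notin E; the ordered pair e = (i,j)
   represents the undirected edge {i,j} and fixes the order x_e = (x_i, x_j).  Dual variables lam e i x  (only coordinates with
   e \in E, i \in e matter). *)

Section SMP.
Variables (R : realType) (V X : finType) (E : {set V * V}).
Variables (Cv : V -> X -> R) (Ce : V * V -> X * X -> R) (eta : R).

Definition dual := V * V -> V -> X -> R.

Definition in_edge (e : V * V) (i : V) : bool := (e.1 == i) || (e.2 == i).

Definition Nb (i : V) : {set V * V} := [set e in E | in_edge e i].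
Definition deg (i : V) : nat := #|Nb i|.

Definition proj (e : V * V) (xe : X * X) (i : V) : X :=
  if i == e.1 then xe.1 else xe.2.

Definition wv (lam : dual) (i : V) (x : X) : R :=
  expR (- eta * Cv i x + eta * \sum_(e in Nb i) lam e i x).
Definition we (lam : dual) (e : V * V) (xe : X * X) : R :=
  expR (- eta * Ce e xe - eta * \sum_(i | in_edge e i) lam e i (proj e xe i)).

Definition L (lam : dual) : R :=
  eta^-1 * \sum_(i : V) ln (\sum_(x : X) wv lam i x)
  + eta^-1 * \sum_(e in E) ln (\sum_(xe : X * X) we lam e xe).

Definition mu_v (lam : dual) (i : V) (x : X) : R :=
  wv lam i x / \sum_(y : X) wv lam i y.
Definition mu_e (lam : dual) (e : V * V) (xe : X * X) : R :=
  we lam e xe / \sum_(ye : X * X) we lam e ye.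

Definition S (lam : dual) (e : V * V) (i : V) (x : X) : R :=
  \sum_(xe : X * X | proj e xe i == x) mu_e lam e xe.

Definition slack (lam : dual) (e : V * V) (i : V) (x : X) : R :=
  S lam e i x - mu_v lam i x.

Definition obj (lam : dual) : R :=
  \sum_(e in E) \sum_(i | in_edge e i) (\sum_(x : X) `|slack lam e i x|) ^+ 2.

Definition smp_update (lam : dual) (i : V) : dual :=
  fun e j x =>
    if (j == i) && (e \in Nb i) then
      lam e j x + eta^-1 * ln (S lam e i x)
      - (eta * (deg i).+1%:R)^-1
          * ln (mu_v lam i x * \prod_(e' in Nb i) S lam e' i x)
    else lam e j x.

Definition lam0 : dual := fun _ _ _ => 0.

Definition iterate (K : nat) (s : K.-tuple V) (k : nat) : dual :=
  foldl smp_update lam0 (take k s).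

Definition output (K : nat) (s : K.-tuple V) : dual :=
  iterate s (Order.arg_min (ord0 : 'I_K.+1) xpredT (fun k : 'I_K.+1 => obj (iterate s k))).

Definition expected_output_obj (K : nat) (p : V -> R) : R :=
  \sum_(s : K.-tuple V) (\prod_(k < K) p (tnth s k)) * obj (output s).

End SMP.

(* Main.v *)
Require Import Defs.
From HB Require Import structures.
From mathcomp Require Import all_boot all_order all_algebra.
From mathcomp Require Import all_classical all_reals all_analysis.
From mathcomp Require Import ring lra.
Import Order.TTheory GRing.Theory Num.Theory.
Local Open Scope ring_scope.

Section Core.
Variables (R : realType) (X : finType).

Lemma eq_le' (x y : R) : x = y -> x <= y. Proof. by move=> ->. Qed.

Lemma ln_le_sub1 (y : R) : 0 < y -> ln y <= y - 1.
Proof.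
move=> y0; have h := @le_ln1Dx R (y - 1).
have e : 1 + (y - 1) = y by ring.
rewrite e in h; apply: h; lra.
Qed.

Lemma hell (u v : X -> R) : (forall x, 0 <= u x) -> (forall x, 0 <= v x) ->
  \sum_x u x ^+ 2 = 1 -> \sum_x v x ^+ 2 = 1 ->
  (\sum_x `|u x ^+ 2 - v x ^+ 2|) ^+ 2 <= 4 * \sum_x (u x - v x) ^+ 2.
Proof.
move=> u0 v0 su sv.
set Sm := \sum_x _; set H := \sum_x _.
have pt : forall s, 8 * s * Sm <= 16 * H + 4 * s ^+ 2.
  move=> s.
  have -> : 4 * s ^+ 2 = \sum_x (2 * s ^+ 2 * (u x ^+ 2 + v x ^+ 2)).
    by rewrite -mulr_sumr big_split /= su sv; lra.
  rewrite /Sm /H mulr_sumr mulr_sumr -big_split /=; apply: ler_sum => x _.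
  have e : `|u x ^+ 2 - v x ^+ 2| = `|u x - v x| * (u x + v x).
    rewrite -[u x + v x]ger0_norm; last by have := u0 x; have := v0 x; lra.
    by rewrite -normrM; congr `|_|; ring.
  have e2 : (u x - v x) ^+ 2 = `|u x - v x| ^+ 2 by rewrite real_normK // num_real.
  rewrite e e2.
  have := u0 x; have := v0 x; have := normr_ge0 (u x - v x).
  set w := `|_|; move=> w0 vv uu.
  have h1 := sqr_ge0 (4 * w - s * (u x + v x)).
  have h2 := sqr_ge0 (s * (u x - v x)).
  nra.
have h := pt Sm; rewrite -mulrA -expr2 in h; lra.
Qed.

Lemma sq_sum_le (T : finType) (A : {set T}) (f : T -> R) :
  (\sum_(e in A) f e) ^+ 2 <= #|A|%:R * \sum_(e in A) f e ^+ 2.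
Proof.
set P := \sum_(e in A) f e; set Q := \sum_(e in A) _; set d : R := #|A|%:R.
have h : \sum_(e in A) (d * f e - P) ^+ 2 = d * (d * Q - P ^+ 2).
  under eq_bigr => e _ do rewrite sqrrB.
  rewrite big_split /= sumrB /= sumr_const -/d.
  under eq_bigr => e _ do rewrite exprMn.
  rewrite -mulr_sumr -/Q sumrMnl -mulr_suml -mulr_sumr -/P -(mulr_natr _ 2) -(mulr_natr _ #|A|) -/d; ring.
have h0 : 0 <= d * (d * Q - P ^+ 2) by rewrite -h sumr_ge0 // => e _; exact: sqr_ge0.
have d0 : 0 <= d by rewrite /d ler0n.
case: (posnP #|A|) => [A0|Apos].
  have -> : P = 0 by rewrite /P big_pred0 // => e; rewrite (card0_eq A0).
  by rewrite expr0n /= mulr_ge0 // sumr_ge0 // => e _; exact: sqr_ge0.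
have dp : 0 < d by rewrite /d ltr0n.
rewrite -subr_ge0; rewrite pmulr_rge0 // in h0.
Qed.

Definition sq (y : R) := expR (ln y / 2).
Lemma sqK y : 0 < y -> sq y ^+ 2 = y.
Proof. by move=> y0; rewrite /sq expr2 -expRD -splitr lnK ?posrE. Qed.
Lemma sq_gt0 y : 0 < sq y. Proof. exact: expR_gt0. Qed.
Lemma ln_sq y : ln (sq y) = ln y / 2. Proof. exact: expRK. Qed.

Lemma amgm (I : finType) (A : {set I}) (b0 : R) (b : I -> R) :
  0 < b0 -> (forall e, 0 < b e) ->
  (#|A|.+1)%:R ^+ 2 * expR ((ln b0 + \sum_(e in A) ln (b e)) / (#|A|.+1)%:R) <=
  (sq b0 + \sum_(e in A) sq (b e)) ^+ 2.
Proof.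
move=> b0p bp; set n : R := (#|A|.+1)%:R.
set d : R := #|A|%:R.
have nd : n = d + 1 by rewrite /n /d natr1.
have d0 : 0 <= d by rewrite /d ler0n.
have n0 : 0 < n by rewrite nd; lra.
set Ts := \sum_(e in A) sq (b e).
have Ts0 : 0 <= Ts by rewrite sumr_ge0 // => e _; exact: ltW (sq_gt0 _).
set T := sq b0 + Ts.
have T0 : 0 < T by rewrite /T; have := sq_gt0 b0; lra.
set m := T / n.
have m0 : 0 < m by rewrite /m divr_gt0.
have h0 : ln b0 / 2 - ln m <= sq b0 / m - 1.
  rewrite -ln_sq -ln_div ?posrE ?sq_gt0 //; apply: ln_le_sub1; by rewrite divr_gt0 // sq_gt0.
have hs : \sum_(e in A) (ln (b e) / 2 - ln m) <= \sum_(e in A) (sq (b e) / m - 1).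
  apply: ler_sum => e _.
  rewrite -ln_sq -ln_div ?posrE ?sq_gt0 //; apply: ln_le_sub1; by rewrite divr_gt0 // sq_gt0.
rewrite !sumrB in hs. rewrite !sumr_const in hs. rewrite -!mulr_suml in hs. rewrite -/Ts in hs. rewrite -(mulr_natr (ln m) #|A|) -/d in hs.
have Tm : sq b0 / m + Ts / m = d + 1.
  by rewrite -mulrDl -/T /m -nd; field; apply/andP; split; apply: lt0r_neq0.
have key : (ln b0 + \sum_(e in A) ln (b e)) / n <= ln m + ln m.
  rewrite ler_pdivrMr // nd; lra.
have : expR ((ln b0 + \sum_(e in A) ln (b e)) / n) <= m ^+ 2.
  have -> : m ^+ 2 = expR (ln m + ln m) by rewrite expRD lnK ?posrE // expr2.
  by rewrite ler_expR.
move=> h; have n20 : 0 < n ^+ 2 by rewrite exprn_gt0.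
rewrite -(ler_pM2l n20) in h; apply: (le_trans h).
by rewrite /m -exprMn; apply: eq_le'; congr (_ ^+ 2); field; apply: lt0r_neq0.
Qed.

Lemma var_step (I : finType) (A : {set I}) (u0 : R) (u : I -> R) :
  \sum_(e in A) (u e - u0) ^+ 2 <=
  (#|A|.+1)%:R * (u0 ^+ 2 + \sum_(e in A) u e ^+ 2) - (u0 + \sum_(e in A) u e) ^+ 2.
Proof.
have h := @sq_sum_le _ A u.
under eq_bigr => e _ do rewrite sqrrB.
rewrite big_split /= sumrB sumr_const sumrMnl -mulr_suml -natr1.
set P := \sum_(e in A) u e in h *; set Q := \sum_(e in A) u e ^+ 2 in h *.
set d : R := #|A|%:R in h *.
rewrite -(mulr_natr (u0 ^+ 2) #|A|) -/d -(mulr_natr _ 2).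
rewrite -subr_ge0.
have -> : (d + 1) * (u0 ^+ 2 + Q) - (u0 + P) ^+ 2 - (Q - P * u0 * 2%:R + u0 ^+ 2 * d)
  = d * Q - P ^+ 2 by ring.
by rewrite subr_ge0.
Qed.

Lemma core (I : finType) (A : {set I}) (a0 : X -> R) (a : I -> X -> R) :
  (forall x, 0 < a0 x) -> (forall e x, 0 < a e x) -> \sum_x a0 x = 1 ->
  (forall e, e \in A -> \sum_x a e x = 1) ->
  \sum_(e in A) (\sum_x `|a e x - a0 x|) ^+ 2 <=
  4 * (#|A|.+1)%:R ^+ 2 *
    (1 - \sum_x expR ((ln (a0 x) + \sum_(e in A) ln (a e x)) / (#|A|.+1)%:R)).
Proof.
move=> a0p ap s0 sa.
set n : R := (#|A|.+1)%:R.
set d : R := #|A|%:R.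
have nd : n = d + 1 by rewrite /n /d natr1.
set G := fun x => expR ((ln (a0 x) + \sum_(e in A) ln (a e x)) / n).
rewrite -/(G _).
apply: (@le_trans _ _ (\sum_(e in A) 4 * \sum_x (sq (a e x) - sq (a0 x)) ^+ 2)).
  apply: ler_sum => e eA.
  have e1 : \sum_x `|a e x - a0 x| = \sum_x `|sq (a e x) ^+ 2 - sq (a0 x) ^+ 2|.
    by apply: eq_bigr => x _; rewrite !sqK.
  rewrite e1; apply: hell => [x|x||]; first exact: ltW (sq_gt0 _).
  - exact: ltW (sq_gt0 _).
  - by rewrite -(sa e eA); apply: eq_bigr => x _; rewrite sqK.
  - by rewrite -s0; apply: eq_bigr => x _; rewrite sqK.
rewrite -mulr_sumr exchange_big /=.
apply: (@le_trans _ _ (4 * \sum_x (n * (a0 x + \sum_(e in A) a e x) - n ^+ 2 * G x))).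
  rewrite ler_pM2l; last by [].
  apply: ler_sum => x _.
  apply: (le_trans (@var_step _ A (sq (a0 x)) (fun e => sq (a e x)))).
  rewrite -/n sqK //.
  under eq_bigr => e _ do rewrite sqK //.
  rewrite lerD2l lerN2.
  exact: amgm.
rewrite sumrB -mulr_sumr big_split /= s0 exchange_big /=.
rewrite (eq_bigr (fun _ => 1)); last by move=> e eA; rewrite sa.
rewrite sumr_const -(mulr_natr _ #|A|) -/d mul1r -mulr_sumr nd.
apply: eq_le'.
have -> : \sum_x expR ((ln (a0 x) + \sum_(e in A) ln (a e x)) / (d + 1)) = \sum_i G i.
  by apply: eq_bigr => x _; rewrite /G nd.
ring.
Qed.
End Core.

Section SMPproof.
Variables (R : realType) (V X : finType) (E : {set V * V}).
Variables (Cv : V -> X -> R) (Ce : V * V -> X * X -> R) (eta : R).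
Hypothesis eta0 : 0 < eta.
Variable x0 : X.

Local Notation wv := (wv E Cv eta).
Local Notation we := (we Ce eta).
Local Notation mu_v := (mu_v E Cv eta).
Local Notation mu_e := (mu_e Ce eta).
Local Notation S := (Defs.S Ce eta).
Local Notation Nb := (Nb E).
Local Notation deg := (deg E).
Local Notation LL := (L E Cv Ce eta).
Local Notation upd := (smp_update E Cv Ce eta).
Local Notation pj := Defs.proj.

Lemma wv_gt0 lam i x : 0 < wv lam i x. Proof. exact: expR_gt0. Qed.
Lemma we_gt0 lam e xe : 0 < we lam e xe. Proof. exact: expR_gt0. Qed.

Lemma Zv_gt0 lam i : 0 < \sum_x wv lam i x.
Proof.
apply: (lt_le_trans (wv_gt0 lam i x0)); rewrite (bigD1 x0) //= lerDl.
by rewrite sumr_ge0 // => x _; exact: ltW (wv_gt0 _ _ _).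
Qed.

Lemma Ze_gt0 lam e : 0 < \sum_xe we lam e xe.
Proof.
apply: (lt_le_trans (we_gt0 lam e (x0, x0))); rewrite (bigD1 (x0, x0)) //= lerDl.
by rewrite sumr_ge0 // => x _; exact: ltW (we_gt0 _ _ _).
Qed.

Lemma mu_v_gt0 lam i x : 0 < mu_v lam i x.
Proof. by rewrite /Defs.mu_v divr_gt0 // ?wv_gt0 ?Zv_gt0. Qed.
Lemma mu_e_gt0 lam e xe : 0 < mu_e lam e xe.
Proof. by rewrite /Defs.mu_e divr_gt0 // ?we_gt0 ?Ze_gt0. Qed.

Lemma mu_v_sum lam i : \sum_x mu_v lam i x = 1.
Proof. by rewrite /Defs.mu_v -mulr_suml divff // lt0r_neq0 // Zv_gt0. Qed.
Lemma mu_e_sum lam e : \sum_xe mu_e lam e xe = 1.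
Proof. by rewrite /Defs.mu_e -mulr_suml divff // lt0r_neq0 // Ze_gt0. Qed.

Lemma pj_diag (e : V * V) (x : X) j : pj e (x, x) j = x.
Proof. by rewrite /Defs.proj; case: ifP. Qed.

Lemma S_gt0 lam e i x : 0 < S lam e i x.
Proof.
rewrite /Defs.S (bigD1 (x, x)) ?pj_diag //=.
apply: (lt_le_trans (mu_e_gt0 lam e (x, x))); rewrite lerDl.
by rewrite sumr_ge0 // => y _; exact: ltW (mu_e_gt0 _ _ _).
Qed.

Lemma S_sum lam e i : \sum_x S lam e i x = 1.
Proof.
rewrite -(mu_e_sum lam e) (partition_big (fun xe => pj e xe i) xpredT) //.
Qed.

Lemma exch (F : V * V -> V -> R) :
  \sum_(e in E) \sum_(j | in_edge e j) F e j = \sum_j \sum_(e in Nb j) F e j.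
Proof.
rewrite (exchange_big_dep xpredT) //=; apply: eq_bigr => j _.
by apply: eq_bigl => e; rewrite inE.
Qed.


Definition nn (i : V) : R := (deg i).+1%:R.
Definition G lam i x :=
  expR ((ln (mu_v lam i x) + \sum_(e in Nb i) ln (S lam e i x)) / nn i).

Lemma nnE i : nn i = (deg i)%:R + 1.
Proof. by rewrite /nn natr1. Qed.
Lemma nn_gt0 i : 0 < nn i.
Proof. by rewrite /nn ltr0n. Qed.

Lemma sumG_gt0 lam i : 0 < \sum_x G lam i x.
Proof.
apply: (@lt_le_trans _ _ (G lam i x0)); first exact: expR_gt0.
rewrite (bigD1 x0) //= lerDl.
by rewrite sumr_ge0 // => x _; exact: expR_ge0.
Qed.

Lemma ln_prodS lam i x :
  ln (mu_v lam i x * \prod_(e in Nb i) S lam e i x) =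
  ln (mu_v lam i x) + \sum_(e in Nb i) ln (S lam e i x).
Proof.
have -> : \prod_(e in Nb i) S lam e i x = expR (\sum_(e in Nb i) ln (S lam e i x)).
  by rewrite expR_sum; apply: eq_bigr => e _; rewrite lnK // posrE S_gt0.
by rewrite lnM ?posrE ?mu_v_gt0 ?expR_gt0 // expRK.
Qed.

Lemma wv_upd_other lam i j x : j != i -> wv (upd lam i) j x = wv lam j x.
Proof.
move=> ji; rewrite /Defs.wv; congr expR; congr (_ + _); congr (_ * _).
by apply: eq_bigr => e _; rewrite /smp_update (negbTE ji).
Qed.

Lemma wv_upd_self lam i x :
  wv (upd lam i) i x = (\sum_y wv lam i y) * G lam i x.
Proof.
have eta_neq0 : eta != 0 by rewrite lt0r_neq0.
have nn_neq0 : nn i != 0 by rewrite lt0r_neq0 // nn_gt0.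
set d : R := (deg i)%:R.
have hs : \sum_(e in Nb i) upd lam i e i x =
    \sum_(e in Nb i) lam e i x + eta^-1 * \sum_(e in Nb i) ln (S lam e i x)
    - (eta * nn i)^-1 * ln (mu_v lam i x * \prod_(e' in Nb i) S lam e' i x) * d.
  rewrite (eq_bigr (fun e => lam e i x + eta^-1 * ln (S lam e i x) - (eta * nn i)^-1
     * ln (mu_v lam i x * \prod_(e' in Nb i) S lam e' i x))); last first.
    by move=> e eN; rewrite /smp_update eqxx eN.
  by rewrite sumrB big_split /= -mulr_sumr sumr_const -mulr_natr.
set Z := \sum_y wv lam i y.
have hw : - eta * Cv i x + eta * \sum_(e in Nb i) lam e i x = ln Z + ln (mu_v lam i x).
  rewrite -lnM ?posrE ?Zv_gt0 ?mu_v_gt0 //.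
  have -> : Z * mu_v lam i x = wv lam i x.
    by rewrite /Defs.mu_v mulrC divfK // lt0r_neq0 // Zv_gt0.
  by rewrite /Defs.wv expRK.
rewrite {1}/Defs.wv hs /G ln_prodS.
rewrite -[Z]lnK ?posrE ?Zv_gt0 // -expRD; congr expR.
set l := ln (mu_v lam i x); set ls := \sum_(e in Nb i) ln (S lam e i x).
have e1 : - eta * Cv i x + eta * (\sum_(e in Nb i) lam e i x + eta^-1 * ls
    - (eta * nn i)^-1 * (l + ls) * d) =
    (- eta * Cv i x + eta * \sum_(e in Nb i) lam e i x) + ls - (l + ls) * d / nn i.
  by field; rewrite eta_neq0 andbT addrC natr1 pnatr_eq0.
rewrite e1 hw.
have nd : nn i = d + 1 by rewrite nnE.
move: nn_neq0; rewrite nd => nn_neq0.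
rewrite /l. clearbody ls. field; by rewrite natr1 pnatr_eq0.
Qed.


Lemma we_upd_out lam i e xe : e \notin Nb i -> we (upd lam i) e xe = we lam e xe.
Proof.
move=> eN; rewrite /Defs.we; congr expR; congr (_ - _); congr (_ * _).
by apply: eq_bigr => j _; rewrite /smp_update (negbTE eN) andbF.
Qed.

Lemma we_upd_in lam i e xe : e \in Nb i ->
  we (upd lam i) e xe = we lam e xe * (G lam i (pj e xe i) / S lam e i (pj e xe i)).
Proof.
move=> eN.
have ei : in_edge e i by move: eN; rewrite inE => /andP[].
have eta_neq0 : eta != 0 by rewrite lt0r_neq0.
have nn_neq0 : nn i != 0 by rewrite lt0r_neq0 // nn_gt0.
rewrite /Defs.we (bigD1 i ei) /= (bigD1 i ei) /=.
have rest : \sum_(j | in_edge e j && (j != i)) upd lam i e j (pj e xe j)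
    = \sum_(j | in_edge e j && (j != i)) lam e j (pj e xe j).
  by apply: eq_bigr => j /andP[_ ji]; rewrite /smp_update (negbTE ji).
rewrite rest /smp_update eqxx eN /=.
set p := pj e xe i.
have hS : (S lam e i p)^-1 = expR (- ln (S lam e i p)).
  by rewrite expRN lnK // posrE S_gt0.
rewrite /G ln_prodS hS -!expRD; congr expR.
set l := ln (mu_v lam i p); set ls := \sum_(e0 in Nb i) ln (S lam e0 i p).
set q := \sum_(j | in_edge e j && (j != i)) lam e j (pj e xe j).
clearbody l ls q.
by field; rewrite eta_neq0 andbT addrC natr1 pnatr_eq0.
Qed.

Lemma Ze_upd lam i e : e \in Nb i ->
  \sum_xe we (upd lam i) e xe = (\sum_xe we lam e xe) * \sum_x G lam i x.
Proof.
move=> eN; rewrite (eq_bigr _ (fun xe _ => we_upd_in lam i e xe eN)).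
set Z := \sum_xe we lam e xe.
have hwe : forall xe, we lam e xe = Z * mu_e lam e xe.
  by move=> xe; rewrite /Defs.mu_e mulrC divfK // lt0r_neq0 // Ze_gt0.
under eq_bigr => xe _ do rewrite hwe -mulrA.
rewrite -mulr_sumr; congr (_ * _).
rewrite (partition_big (fun xe => pj e xe i) xpredT) //=; apply: eq_bigr => x _.
under eq_bigr => xe /eqP exe do rewrite exe.
rewrite -mulr_suml.
change (\sum_(xe | pj e xe i == x) mu_e lam e xe) with (S lam e i x).
by rewrite mulrC divfK // lt0r_neq0 // S_gt0.
Qed.

Lemma L_upd lam i : LL (upd lam i) = LL lam + eta^-1 * nn i * ln (\sum_x G lam i x).
Proof.
rewrite /Defs.L.
have hv : \sum_j ln (\sum_x wv (upd lam i) j x)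
    = \sum_j ln (\sum_x wv lam j x) + ln (\sum_x G lam i x).
  rewrite (bigD1 i) //= [X in _ = X + _](bigD1 i) //=.
  under eq_bigr => x _ do rewrite wv_upd_self.
  rewrite -mulr_sumr lnM ?posrE ?Zv_gt0 ?sumG_gt0 //.
  rewrite (eq_bigr (fun j => ln (\sum_x wv lam j x))); last first.
    by move=> j ji; congr ln; apply: eq_bigr => x _; rewrite wv_upd_other.
  by rewrite addrAC.
have he : \sum_(e in E) ln (\sum_xe we (upd lam i) e xe)
    = \sum_(e in E) ln (\sum_xe we lam e xe) + ln (\sum_x G lam i x) * (deg i)%:R.
  rewrite (eq_bigr (fun e => ln (\sum_xe we lam e xe) +
      (if e \in Nb i then ln (\sum_x G lam i x) else 0))); last first.
    move=> e eE; case: ifP => eN.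
      by rewrite Ze_upd // lnM ?posrE ?Ze_gt0 ?sumG_gt0.
    rewrite addr0; congr ln; apply: eq_bigr => xe _; rewrite we_upd_out //.
    by rewrite eN.
  rewrite big_split /=; congr (_ + _).
  rewrite -big_mkcondr /= (eq_bigl (fun e => e \in Nb i)); last first.
    move=> e; rewrite /=; apply/idP/idP => [/andP[]//|h]; rewrite h andbT.
    by move: h; rewrite inE => /andP[].
  by rewrite sumr_const mulr_natr.
rewrite hv he nnE; ring.
Qed.


Local Notation sl := (slack E Cv Ce eta).
Local Notation ob := (obj E Cv Ce eta).

Lemma step_vertex lam i :
  \sum_(e in Nb i) (\sum_x `|sl lam e i x|) ^+ 2 <= 4 * eta * nn i * (LL lam - LL (upd lam i)).
Proof.
have c : \sum_(e in Nb i) (\sum_x `|sl lam e i x|) ^+ 2 <=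
    4 * nn i ^+ 2 * (1 - \sum_x G lam i x).
  exact: (@core R X _ (Nb i) (mu_v lam i) (fun e x => S lam e i x)
    (mu_v_gt0 lam i) (fun e x => S_gt0 lam e i x) (mu_v_sum lam i) (fun e _ => S_sum lam e i)).
apply: (le_trans c).
have hl := @ln_le_sub1 R _ (sumG_gt0 lam i).
rewrite L_upd.
have eta_neq0 : eta != 0 by rewrite lt0r_neq0.
have -> : 4 * eta * nn i * (LL lam - (LL lam + eta^-1 * nn i * ln (\sum_x G lam i x)))
   = 4 * nn i ^+ 2 * (- ln (\sum_x G lam i x)).
  by field.
rewrite ler_pM2l; first lra.
by rewrite mulr_gt0 // exprn_gt0 // nn_gt0.
Qed.

Lemma obj_split lam :
  ob lam = \sum_i \sum_(e in Nb i) (\sum_x `|sl lam e i x|) ^+ 2.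
Proof. exact: (exch (fun e i => (\sum_x `|sl lam e i x|) ^+ 2)). Qed.

Hypothesis hdeg : forall i, (0 < deg i)%N.
Let N := (\sum_j deg j)%N.
Let p i : R := (deg i)%:R / N%:R.

Lemma Nd i : N%:R * p i = (deg i)%:R.
Proof.
have : (deg i <= N)%N by rewrite /N (bigD1 i) //= leq_addr.
move=> h; have N0 : (0 < N)%N by apply: leq_trans (hdeg i) h.
by rewrite /p mulrC divfK // pnatr_eq0 -lt0n.
Qed.

Lemma step_total lam :
  ob lam <= 8 * N%:R * eta * (LL lam - \sum_i p i * LL (upd lam i)).
Proof.
have -> : 8 * N%:R * eta * (LL lam - \sum_i p i * LL (upd lam i)) =
    \sum_i 8 * eta * (deg i)%:R * (LL lam - LL (upd lam i)).
  rewrite mulrBr; under [in RHS]eq_bigr do rewrite mulrBr.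
  rewrite sumrB; congr (_ - _).
    rewrite -mulr_suml -mulr_sumr -natr_sum -/N; ring.
  rewrite mulr_sumr; apply: eq_bigr => i _.
  by rewrite -(Nd i); ring.
rewrite obj_split; apply: ler_sum => i _.
have h := step_vertex lam i.
apply: (le_trans h).
have d1 : 1 <= (deg i)%:R :> R by rewrite ler1n.
have p0 : 0 < 4 * eta * nn i by rewrite !mulr_gt0 // nn_gt0.
have g0 : 0 <= LL lam - LL (upd lam i).
  have s0 : 0 <= \sum_(e in Nb i) (\sum_x `|sl lam e i x|) ^+ 2.
    by apply: sumr_ge0 => e _; exact: sqr_ge0.
  by rewrite -(pmulr_rge0 _ p0); apply: le_trans h.
rewrite ler_wpM2r // nnE.
set d := (deg i)%:R in d1 *.
nra.
Qed.


Variable v0 : V.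

Let W {m} (s : m.-tuple V) : R := \prod_(k < m) p (tnth s k).

Lemma p_ge0 i : 0 <= p i.
Proof. by rewrite /p divr_ge0 // ler0n. Qed.

Lemma p_sum : \sum_i p i = 1.
Proof.
have h := Nd v0; have N0 : N%:R != 0 :> R.
  apply/negP => /eqP h0; move: h; rewrite h0 mul0r => /eqP.
  by rewrite eq_sym pnatr_eq0 => /eqP d0; move: (hdeg v0); rewrite d0.
by rewrite /p -mulr_suml -natr_sum -/N divff.
Qed.

Lemma tuple_sum m (F : m.+1.-tuple V -> R) :
  \sum_s F s = \sum_x \sum_(t : m.-tuple V) F [tuple of x :: t].
Proof.
rewrite pair_big /= (reindex (fun q : V * m.-tuple V => [tuple of q.1 :: q.2])) /=.
  by apply: eq_bigl.
exists (fun s : m.+1.-tuple V => (thead s, behead_tuple s)).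
  by move=> [x t] _; rewrite /= theadE; congr pair; apply: val_inj.
by move=> s _; case/tupleP: s => x t; apply: val_inj; rewrite /= theadE.
Qed.

Lemma W_cons m x (t : m.-tuple V) : W [tuple of x :: t] = p x * W t.
Proof.
rewrite /W big_ord_recl tnth0; congr (_ * _); apply: eq_bigr => k _.
by rewrite tnthS.
Qed.

Lemma W_sum m : \sum_(s : m.-tuple V) W s = 1.
Proof.
elim: m => [|m IH].
  rewrite (eq_bigr (fun _ => 1)); last by move=> s _; rewrite /W big_ord0.
  by rewrite sumr_const card_tuple expn0.
rewrite tuple_sum (eq_bigr (fun x => p x)) ?p_sum // => x _.
by under eq_bigr => t _ do rewrite W_cons; rewrite -mulr_sumr IH mulr1.
Qed.

Lemma W_ge0 m (s : m.-tuple V) : 0 <= W s.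
Proof. by rewrite /W prodr_ge0 // => k _; exact: p_ge0. Qed.

Lemma induct m lam :
  \sum_(s : m.-tuple V) W s * \sum_(k < m) ob (foldl upd lam (take k s)) <=
  8 * N%:R * eta * (LL lam - \sum_(s : m.-tuple V) W s * LL (foldl upd lam s)).
Proof.
set c := 8 * N%:R * eta.
have c0 : 0 <= c by rewrite /c !mulr_ge0 // ?ler0n // ltW.
elim: m lam => [|m IH] lam.
  rewrite (eq_bigr (fun _ => 0)); last by move=> s _; rewrite big_ord0 mulr0.
  rewrite big1 // (eq_bigr (fun s => W s * LL lam)); last first.
    by move=> s _; rewrite (tuple0 s).
  by rewrite -mulr_suml W_sum mul1r subrr mulr0.
have hstep1 : forall x (t : m.-tuple V),
  \sum_(k < m.+1) ob (foldl upd lam (take k [tuple of x :: t])) =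
  ob lam + \sum_(k < m) ob (foldl upd (upd lam x) (take k t)).
  move=> x t; rewrite big_ord_recl /=; congr (_ + _).
rewrite !tuple_sum.
have eL : \sum_x \sum_(t : m.-tuple V) W [tuple of x :: t] *
     \sum_(k < m.+1) ob (foldl upd lam (take k [tuple of x :: t])) =
   \sum_x p x * (ob lam + \sum_(t : m.-tuple V) W t *
     \sum_(k < m) ob (foldl upd (upd lam x) (take k t))).
  apply: eq_bigr => x _.
  under eq_bigr => t _ do rewrite W_cons hstep1 mulrDr.
  rewrite big_split /= -mulr_suml -mulr_sumr W_sum mulr1 mulrDr; congr (_ + _).
  by rewrite mulr_sumr; apply: eq_bigr => t _; rewrite mulrA.
have eR : \sum_x \sum_(t : m.-tuple V) W [tuple of x :: t] *
     LL (foldl upd lam [tuple of x :: t]) =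
   \sum_x p x * \sum_(t : m.-tuple V) W t * LL (foldl upd (upd lam x) t).
  apply: eq_bigr => x _; rewrite mulr_sumr; apply: eq_bigr => t _.
  by rewrite W_cons -mulrA.
rewrite eL eR.
set b := fun x => \sum_(t : m.-tuple V) W t * LL (foldl upd (upd lam x) t).
apply: (@le_trans _ _ (ob lam + \sum_x p x * (c * (LL (upd lam x) - b x)))).
  under eq_bigr => x _ do rewrite mulrDr.
  rewrite big_split /= -mulr_suml p_sum mul1r lerD2l.
  by apply: ler_sum => x _; rewrite ler_wpM2l ?p_ge0 // IH.
rewrite (eq_bigr (fun x => c * (p x * LL (upd lam x)) - c * (p x * b x))); last first.
  by move=> x _; rewrite /b; ring.
rewrite sumrB -!mulr_sumr.
have st := step_total lam; rewrite -/c in st.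
lra.
Qed.


Lemma L_lb lam : - \sum_i Cv i x0 - \sum_(e in E) Ce e (x0, x0) <= LL lam.
Proof.
have eta_neq0 : eta != 0 by rewrite lt0r_neq0.
have hv : forall i, eta * (- Cv i x0 + \sum_(e in Nb i) lam e i x0) <= ln (\sum_x wv lam i x).
  move=> i; have -> : eta * (- Cv i x0 + \sum_(e in Nb i) lam e i x0) = ln (wv lam i x0).
    by rewrite /Defs.wv expRK; ring.
  rewrite ler_ln ?posrE ?wv_gt0 ?Zv_gt0 // (bigD1 x0) //= lerDl.
  by rewrite sumr_ge0 // => x _; exact: ltW (wv_gt0 _ _ _).
have he : forall e, eta * (- Ce e (x0, x0) - \sum_(j | in_edge e j) lam e j x0)
    <= ln (\sum_xe we lam e xe).
  move=> e; have -> : eta * (- Ce e (x0, x0) - \sum_(j | in_edge e j) lam e j x0)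
      = ln (we lam e (x0, x0)).
    rewrite /Defs.we expRK.
    under [in RHS]eq_bigr => j _ do rewrite pj_diag.
    ring.
  rewrite ler_ln ?posrE ?we_gt0 ?Ze_gt0 // (bigD1 (x0, x0)) //= lerDl.
  by rewrite sumr_ge0 // => x _; exact: ltW (we_gt0 _ _ _).
have ei : 0 <= eta^-1 by rewrite invr_ge0 ltW.
have h1 : eta^-1 * \sum_i eta * (- Cv i x0 + \sum_(e in Nb i) lam e i x0)
    <= eta^-1 * \sum_i ln (\sum_x wv lam i x).
  by rewrite ler_wpM2l //; apply: ler_sum => i _; exact: hv.
have h2 : eta^-1 * \sum_(e in E) eta * (- Ce e (x0, x0) - \sum_(j | in_edge e j) lam e j x0)
    <= eta^-1 * \sum_(e in E) ln (\sum_xe we lam e xe).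
  by rewrite ler_wpM2l //; apply: ler_sum => e _; exact: he.
rewrite /Defs.L; apply: (le_trans _ (lerD h1 h2)).
rewrite -!mulr_sumr !mulKf // big_split /= sumrB /= sumrN.
rewrite exch.
rewrite sumrN; lra.
Qed.

Lemma final K : (1 <= K)%N ->
  expected_output_obj E Cv Ce eta K p <=
  8 * N%:R * eta * (LL (@lam0 R V X) - inf [set LL lam | lam in setT]) / K%:R.
Proof.
move=> hK.
set c := 8 * N%:R * eta.
have c0 : 0 <= c by rewrite /c !mulr_ge0 // ?ler0n // ltW.
have Kpos : 0 < K%:R :> R by rewrite ltr0n.
have h1 : forall s : K.-tuple V,
    ob (output E Cv Ce eta s) <= K%:R^-1 * \sum_(k < K) ob (foldl upd (@lam0 R V X) (take k s)).
  move=> s; rewrite /Defs.output.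
  case: arg_minP => // i0 _ Hm.
  rewrite -(ler_pM2l Kpos) mulrA mulfV ?mul1r ?lt0r_neq0 //.
  rewrite mulr_natl -[X in _ *+ X](card_ord K) -sumr_const.
  apply: ler_sum => k _.
  have := Hm (inord k) isT; rewrite /Defs.iterate inordK //.
  exact: leqW (ltn_ord k).
have h2 : expected_output_obj E Cv Ce eta K p <=
    K%:R^-1 * \sum_(s : K.-tuple V) W s * \sum_(k < K) ob (foldl upd (@lam0 R V X) (take k s)).
  rewrite /expected_output_obj mulr_sumr; apply: ler_sum => s _.
  rewrite mulrCA ler_wpM2l //; first exact: W_ge0.
match goal with |- context [inf ?S0] => set SS := S0 end.
have lbS : has_lbound SS.
  exists (- \sum_i Cv i x0 - \sum_(e in E) Ce e (x0, x0)).
  by move=> y [lam _ <-]; exact: L_lb.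
have hinf : forall lam, inf SS <= LL lam.
  by move=> lam; apply: (ge_inf lbS); exists lam.
have h4 : inf SS <= \sum_(s : K.-tuple V) W s * LL (foldl upd (@lam0 R V X) s).
  rewrite -[inf SS]mul1r -(W_sum K) mulr_suml; apply: ler_sum => s _.
  by rewrite ler_wpM2l ?W_ge0.
have h3 := induct K (@lam0 R V X); rewrite -/c in h3.
apply: (le_trans h2).
have -> : c * (LL (@lam0 R V X) - inf SS) / K%:R = K%:R^-1 * (c * (LL (@lam0 R V X) - inf SS)).
  by rewrite mulrC.
rewrite ler_wpM2l ?invr_ge0 ?ler0n //; apply: (le_trans h3).
by rewrite ler_wpM2l // lerB.
Qed.

End SMPproof.

Theorem lemma10 (R : realType) (V X : finType) (E : {set V * V})
  (Cv : V -> X -> R) (Ce : V * V -> X * X -> R) (eta : R) (K : nat) :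
  (forall e, e \in E -> e.1 != e.2) ->
  (forall e, e \in E -> (e.2, e.1) \notin E) ->
  (forall i : V, (0 < deg E i)%N) ->
  (2 <= #|X|)%N ->
  0 < eta ->
  (1 <= K)%N ->
  let N := (\sum_(j : V) deg E j)%N in
  expected_output_obj E Cv Ce eta K (fun i => (deg E i)%:R / N%:R)
  <= 8 * N%:R * eta
     * (L E Cv Ce eta (@lam0 R V X) - inf [set L E Cv Ce eta lam | lam in setT])
     / K%:R.
Proof.
move=> _ _ hdeg hX eta0 hK; cbv zeta.
set N := (\sum_(j : V) deg E j)%N.
have : (0 < #|X|)%N by apply: leq_trans hX.
case/card_gt0P => x0 _.
case: (pickP V) => [v0 _ | V0].
  exact: (@final R V X E Cv Ce eta eta0 x0 hdeg v0 K hK).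
have N0 : N = 0%N by rewrite /N big1 // => j _; move: (V0 j).
rewrite /expected_output_obj big1; last first.
  by move=> s _; move: (V0 (tnth s (Ordinal hK))).
by rewrite N0 mulr0 !mul0r.
Qed.
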